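(* Let $\mathbf k$ be a commutative domain of characteristic zero, let $\phi(x)=\sum_{i=0}^r a_ix^i\in\mathbf k[x]$, and let $\omega=xy-\phi(x)$. The following are equivalent: (1) for every commutative Rota-Baxter algebra $(R,P)$ of weight $0$, the $\omega$-cover $\widetilde P$ of $P$ on $R^{\mathbb N}$ (weight-$0$ Hurwitz product) is a Rota-Baxter operator of weight $0$; (2) $\phi=a_0$ is constant, i.e. $\omega=xy-a_0$; (3) for every commutative Rota-Baxter algebra $(R,P)$ of weight $0$ and all $f\in R^{\mathbb N}$, $\widetilde P(f)=(P(f_0),a_0f_0,a_0f_1,a_0f_2,\dots)$.
   Context: A Rota-Baxter operator of weight $0$ on an algebra $A$ is a $\mathbf{k}$-linear $P$ with $P(x)P(y)=P(P(x)y)+P(xP(y))$. $R^{\mathbb N}$ is the set of sequences $(f_n)_{n\in\mathbb N}$ in $R$ with product $(fg)_n=\sum_{j=0}^n\binom{n}{j}f_{n-j}g_j$, and $(\partial_R f)_n=f_{n+1}$. For $\omega=xy-(\phi(x)+y\psi(x))$ with $\phi=\sum_{i=0}^r a_ix^i$, $\psi=\sum_{j=0}^s b_jx^j$ in $\mathbf k[x]$, the $\omega$-cover $\widetilde P$ of $P$ is the unique linear operator on $R^{\mathbb N}$ with $\widetilde P_0(f)=P(f_0)$ and $\widetilde P_n(f)=\sum_{i=0}^r a_if_{n-1+i}+\sum_{j=0}^s b_j\widetilde P_{n-1}(\partial_R^jf)$ for $n\ge1$, where $\widetilde P_n(f):=\widetilde P(f)_n$ (here $\psi=0$). *)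

(* Defs.v *)
From HB Require Import structures.
From mathcomp Require Import all_boot all_order all_algebra.
Set Implicit Arguments. Unset Strict Implicit. Unset Printing Implicit Defensive.
Import GRing.Theory.
Local Open Scope ring_scope.

Section Defs.
Variables (k : comNzRingType) (R : comAlgType k).

Definition is_RB0 (P : R -> R) : Prop :=
  (forall (a : k) (x y : R), P (a *: x + y) = a *: P x + P y) /\
  (forall x y : R, P x * P y = P (P x * y) + P (x * P y)).

Definition hmul (f g : nat -> R) : nat -> R :=
  fun n => \sum_(j < n.+1) 'C(n, j)%:R * f (n - j)%N * g j.

Definition dR (f : nat -> R) : nat -> R := fun n => f n.+1.

Definition is_RB0_seq (Q : (nat -> R) -> (nat -> R)) : Prop :=
  (forall (a : k) (f g : nat -> R) (n : nat),
      Q (fun m => a *: f m + g m) n = a *: Q f n + Q g n) /\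
  (forall (f g : nat -> R) (n : nat),
      hmul (Q f) (Q g) n = Q (hmul (Q f) g) n + Q (hmul f (Q g)) n).

(* The omega-cover of P for omega = xy - (phi(x) + y psi(x)):
   cover_0(f) = P(f_0),
   cover_n(f) = sum_i a_i f_{n-1+i} + sum_j b_j cover_{n-1}(dR^j f). *)
Fixpoint cover_n (phi psi : {poly k}) (P : R -> R) (n : nat) (f : nat -> R) : R :=
  match n with
  | 0 => P (f 0%N)
  | n'.+1 => \sum_(i < size phi) phi`_i *: f (n' + i)%N
             + \sum_(j < size psi) psi`_j *: cover_n phi psi P n' (iter j dR f)
  end.

Definition omega_cover (phi psi : {poly k}) (P : R -> R) : (nat -> R) -> (nat -> R) :=
  fun f n => cover_n phi psi P n f.

End Defs.

(* Main.v *)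
Require Import Defs.
From HB Require Import structures.
From mathcomp Require Import all_boot all_order all_algebra.
From mathcomp Require Import ring.
Import GRing.Theory.
Local Open Scope ring_scope.

Lemma key (k : comNzRingType) (R : comAlgType k) (a0 : k) (P : R -> R)
  (f g : nat -> R) (m : nat) :
  let Q := fun (h : nat -> R) n => if n is n'.+1 then a0 *: h n' else P (h 0%N) in
  hmul (Q f) (Q g) m.+1 = a0 *: hmul (Q f) g m + a0 *: hmul f (Q g) m.
Proof.
move=> Q; rewrite /hmul.
have b0 : forall i, bump 0 i = i.+1 by move=> i; rewrite /bump add1n.
have E : forall i : 'I_m, Q f (m - i)%N = a0 *: f (m - i.+1)%N.
  by move=> i; rewrite -subnSK.
rewrite big_ord_recl big_ord_recr /=.
under eq_bigr do rewrite b0 subSS E binS natrD add0n.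
rewrite b0 subSS subnn add0n.
rewrite [in X in _ = a0 *: X + _]big_ord_recr /=.
rewrite [in X in _ = _ + a0 *: X]big_ord_recl /=.
under [in X in _ = a0 *: (X + _) + _]eq_bigr do rewrite E.
under [in X in _ = _ + a0 *: (_ + X)]eq_bigr do rewrite b0 add0n.
rewrite subnn subn0 bin0 binn bin0 binn.
rewrite !scalerDr !scaler_sumr.
change (Q f 0%N) with (P (f 0%N)).
rewrite (eq_bigr (fun i : 'I_m => a0 *: ('C(m, i)%:R * (a0 *: f (m - i.+1)%N) * g i)
   + a0 *: ('C(m, i.+1)%:R * f (m - i.+1)%N * (a0 *: g i)))); last first.
  move=> i _; rewrite !mulrDl [in LHS]addrC; congr (_ + _); [by rewrite scalerAr | by rewrite scalerAl scalerAr].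
rewrite big_split /=.
rewrite !mul1r -scalerAl -scalerAr.
set S1 := \sum_(i < m) _. set S2 := \sum_(i < m) _.
set D := a0 *: (f m * _). set C := a0 *: (P _ * _).
rewrite -!addrA [D + _]addrCA; congr (_ + _).
by rewrite [S2 + C]addrC addrCA.
Qed.

Lemma hmul_ext (k : comNzRingType) (R : comAlgType k) (f f' g g' : nat -> R) n :
  (forall m, f m = f' m) -> (forall m, g m = g' m) -> hmul f g n = hmul f' g' n.
Proof. by move=> Hf Hg; rewrite /hmul; apply: eq_bigr => j _; rewrite Hf Hg. Qed.

Lemma hmulC (k : comNzRingType) (R : comAlgType k) (f g : nat -> R) n :
  hmul f g n = hmul g f n.
Proof.
rewrite /hmul (reindex_inj rev_ord_inj) /=; apply: eq_bigr => j _.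
have hj : (j <= n)%N by rewrite -ltnS.
rewrite subSS subKn // bin_sub //; by rewrite mulrAC.
Qed.

Lemma cover0 (k : comNzRingType) (R : comAlgType k) (phi : {poly k}) (P : R -> R) f :
  omega_cover phi 0 P f 0 = P (f 0%N).
Proof. by []. Qed.

Lemma coverS (k : comNzRingType) (R : comAlgType k) (phi : {poly k}) (P : R -> R) f n :
  omega_cover phi 0 P f n.+1 = \sum_(i < size phi) phi`_i *: f (n + i)%N.
Proof. by rewrite /omega_cover /= size_poly0 big_ord0 addr0. Qed.

Lemma sum_ind (R : nmodType) (N c : nat) (F : nat -> R) :
  \sum_(j < N) (if (j : nat) == c then F j else 0) = if (c < N)%N then F c else 0.
Proof.
case: ltnP => h.
  rewrite (bigD1 (Ordinal h)) //= eqxx big1 ?addr0 // => j hj.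
  by rewrite ifF //; apply/negbTE; apply: contra hj => /eqP e; apply/eqP/val_inj.
by rewrite big1 // => j _; rewrite ifF //; apply/negbTE; rewrite neq_ltn (leq_trans (ltn_ord j) h).
Qed.

Lemma two_three (k : idomainType) (phi : {poly k}) :
  phi = (phi`_0)%:P ->
  (forall (R : comAlgType k) (P : R -> R), is_RB0 P ->
          forall (f : nat -> R) (n : nat),
            omega_cover phi 0 P f n =
              (if n is n'.+1 then phi`_0 *: f n' else P (f 0%N))).
Proof.
move=> Hphi R P _ f [|n] //; rewrite coverS.
set c := phi`_0 in Hphi *; rewrite Hphi size_polyC.
case: (eqVneq c 0) => [->|nz] /=; first by rewrite big_ord0 scale0r.
by rewrite big_ord1 coefC addn0.
Qed.

Lemma three_one (k : idomainType) (phi : {poly k}) :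
  (forall (R : comAlgType k) (P : R -> R), is_RB0 P ->
          forall (f : nat -> R) (n : nat),
            omega_cover phi 0 P f n =
              (if n is n'.+1 then phi`_0 *: f n' else P (f 0%N))) ->
  (forall (R : comAlgType k) (P : R -> R),
          is_RB0 P -> is_RB0_seq (omega_cover phi 0 P)).
Proof.
move=> H3 R P HP.
have HQ := H3 R P HP.
split.
  move=> a f g [|n]; rewrite !HQ /=; first by case: HP => ->.
  by rewrite scalerDr !scalerA mulrC.
move=> f g [|m]; rewrite !HQ /=.
  rewrite /hmul !big_ord1 /= !mul1r subn0.
  by case: HP => _ ->.
set Q := fun (h : nat -> R) n => if n is n'.+1 then phi`_0 *: h n' else P (h 0%N).
rewrite (@hmul_ext _ _ _ (Q f) _ (Q g)) ?(@hmul_ext _ _ _ (Q f) g g) 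
  ?(@hmul_ext _ _ f f _ (Q g)) //.
exact: key.
Qed.

Lemma one_two (k : idomainType) (hchar : [pchar k] =i pred0) (phi : {poly k}) :
  (forall (R : comAlgType k) (P : R -> R),
          is_RB0 P -> is_RB0_seq (omega_cover phi 0 P)) -> phi = (phi`_0)%:P.
Proof.
move=> H1.
case: (leqP (size phi) 1) => [/size1_polyC //|hs].
exfalso.
have hs0 : (0 < size phi)%N by apply: ltn_trans hs.
set d := (size phi).-1.
have hd : (0 < d)%N by rewrite /d -ltnS prednK.
have hds : (d < size phi)%N by rewrite /d prednK.
have ad : phi`_d != 0.
  by rewrite /d -lead_coefE lead_coef_eq0 -size_poly_eq0 -lt0n.
pose P0 := fun _ : k^o => 0 : k^o.
have RB : is_RB0 P0 by split => *; rewrite /P0 ?scaler0 ?mulr0 ?addr0.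
have [_ H] := H1 _ P0 RB.
pose f := fun j : nat => (if j == d then 1 else 0) : k^o.
pose Q := omega_cover phi 0 P0.
have Qf1 : Q f 1%N = phi`_d.
  rewrite /Q coverS.
  transitivity (\sum_(i < size phi) (if (i:nat) == d then phi`_i else 0)).
    by apply: eq_bigr => i _; rewrite add0n /f; case: eqP => _; [exact: mulr1 | exact: mulr0].
  by rewrite (@sum_ind _ _ _ (fun j => phi`_j)) hds.
have Hh : forall i, (i < size phi)%N ->
    hmul (Q f) f (1 + i) = if i == d then (d.+1)%:R * phi`_d else 0.
  move=> i hi; rewrite /hmul.
  transitivity (\sum_(j < (1+i).+1)
      (if (j:nat) == d then 'C(1+i, j)%:R * Q f (1+i-j)%N else 0)).
    by apply: eq_bigr => j _; rewrite /f; case: eqP => _; [rewrite mulr1 | rewrite mulr0].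
  rewrite (@sum_ind _ _ _ (fun j => 'C(1+i, j)%:R * Q f (1+i-j)%N)).
  case: (eqVneq i d) => [->|ne].
    by rewrite ltnS leq_addl add1n binSn -addn1 addKn Qf1.
  case: ifP => // h.
  have -> : (1 + i - d = 0)%N.
    have hid : (i <= d)%N by rewrite -ltnS /d prednK.
    by apply/eqP; rewrite subn_eq0 add1n ltn_neqAle ne hid.
  by change (Q f 0%N) with (0 : k^o); rewrite mulr0.
have E := H f f 2%N.
have R1 : Q (hmul (Q f) f) 2%N = phi`_d * (d.+1%:R * phi`_d).
  rewrite /Q coverS.
  rewrite (eq_bigr (fun i : 'I_(size phi) =>
     if (i:nat) == d then phi`_i * (d.+1%:R * phi`_d) else 0)).
    by rewrite (@sum_ind _ _ _ (fun j => phi`_j * (d.+1%:R * phi`_d))) hds.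
  move=> i _; rewrite Hh //; case: eqP => _; [done | exact: mulr0].
have R2 : Q (hmul f (Q f)) 2%N = Q (hmul (Q f) f) 2%N.
  by rewrite /Q !coverS; apply: eq_bigr => i _; rewrite hmulC.
rewrite -/Q R2 R1 /hmul !big_ord_recr big_ord0 /= in E.
have Q0 : Q f 0%N = 0 := erefl.
rewrite subn0 subnn subn1 /= Q0 Qf1 bin1 !mulr0 !mul0r add0r addr0 in E.
have E' : (0 + 2%:R * phi`_d * phi`_d : k) =
   phi`_d * (d.+1%:R * phi`_d) + phi`_d * (d.+1%:R * phi`_d) := E.
have E2 : (2 * d)%:R * (phi`_d * phi`_d) = 0 :> k.
  have -> : (2 * d)%:R * (phi`_d * phi`_d) =
     (phi`_d * (d.+1%:R * phi`_d) + phi`_d * (d.+1%:R * phi`_d))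
     - 2%:R * phi`_d * phi`_d :> k by ring.
  by rewrite -E' add0r subrr.
move/eqP: E2; rewrite mulf_eq0 (negbTE (mulf_neq0 ad ad)) orbF.
have /pcharf0P -> := hchar.
by rewrite muln_eq0 /= => /eqP d0; rewrite d0 in hd.
Qed.

Theorem proposition3p4 (k : idomainType) (hchar : [pchar k] =i pred0)
  (phi : {poly k}) :
  [<-> (* (1) *)
       (forall (R : comAlgType k) (P : R -> R),
          is_RB0 P -> is_RB0_seq (omega_cover phi 0 P));
       (* (2) *)
       phi = (phi`_0)%:P;
       (* (3) *)
       (forall (R : comAlgType k) (P : R -> R), is_RB0 P ->
          forall (f : nat -> R) (n : nat),
            omega_cover phi 0 P f n =
              (if n is n'.+1 then phi`_0 *: f n' else P (f 0%N)))].
Proof.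
split; first exact: one_two.
split; first exact: two_three.
exact: three_one.
Qed.
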